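(* Let $C$ be the middle-thirds Cantor set and for $n\in\mathbb{N}$ let $S_n:=\{p/q\in C:\gcd(p,q)=1,\ 3^{n-1}\le q<3^n\}$ and, for $K<\infty$, $S_n^{(K)}:=\{p/q\in S_n: P(p/q)\le K\log q\}$. Suppose there exists $K<\infty$ such that for every $\varepsilon_1>0$, $\#(S_n\setminus S_n^{(K)})=O(2^{n(1+\varepsilon_1)})$. Then for every $\varepsilon_1>0$, $\#(S_n)=O(2^{n(1+\varepsilon_1)})$.
   Context: $C=\{x\in[0,1]: x=\sum_{i\ge1}a_i3^{-i}\text{ with all }a_i\in\{0,2\}\}$. For a rational number $p/q$, its period $P(p/q)$ is the (minimal) period of the eventually periodic part of its ternary expansion. $\log$ is the natural logarithm. *)

(* Defs.v *)
From Stdlib Require Import Reals Arith List.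
Open Scope R_scope.

(* Middle-thirds Cantor set: x = sum_{i>=1} a_i 3^{-i}, a_i in {0,2}.
   Here a k stands for the digit a_{k+1}. *)
Definition cantor (x : R) : Prop :=
  0 <= x <= 1 /\
  exists a : nat -> nat,
    (forall k, a k = 0%nat \/ a k = 2%nat) /\
    infinite_sum (fun k => INR (a k) / 3 ^ (S k)) x.

(* i-th ternary digit (i >= 1) of p/q (standard greedy expansion):
   floor(3^i p / q) mod 3. *)
Definition tdigit (p q i : nat) : nat := ((p * 3 ^ i) / q) mod 3.

Definition is_eventual_period (p q P : nat) : Prop :=
  (1 <= P)%nat /\
  exists N : nat, forall i : nat, (N <= i)%nat ->
    tdigit p q (i + P) = tdigit p q i.

Definition min_period (p q P : nat) : Prop :=
  is_eventual_period p q P /\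
  forall P', is_eventual_period p q P' -> (P <= P')%nat.

(* Rationals p/q (reduced, p,q naturals) are encoded by the pair (p,q). *)
Definition S_n (n : nat) (r : nat * nat) : Prop :=
  let (p, q) := r in
  cantor (INR p / INR q) /\ Nat.gcd p q = 1%nat /\
  (3 ^ (n - 1) <= q)%nat /\ (q < 3 ^ n)%nat.

Definition S_nK (K : R) (n : nat) (r : nat * nat) : Prop :=
  S_n n r /\
  let (p, q) := r in
  exists P, min_period p q P /\ INR P <= K * ln (INR q).

Definition card_le (A : nat * nat -> Prop) (M : R) : Prop :=
  forall l : list (nat * nat), NoDup l -> (forall x, In x l -> A x) ->
    INR (length l) <= M.

Definition count_bigO (A : nat -> nat * nat -> Prop) (eps : R) : Prop :=
  exists (c : R) (N : nat), forall n : nat, (N <= n)%nat ->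
    card_le (A n) (c * Rpower 2 (INR n * (1 + eps))).

(* Main.v *)
Require Import Defs.
From Stdlib Require Import Reals Arith List Lia Lra ZArith ClassicalEpsilon Classical.
From mathcomp Require all_boot.
Module DivBound.
Import all_boot.
Local Open Scope nat_scope.

Lemma powE m n : Nat.pow m n = m ^ n.
Proof. elim: n => [|n IH] //=; by rewrite expnS IH. Qed.

Lemma inE' (x : nat) s : In x s <-> x \in s.
Proof.
elim: s => [|y s IH] //=; rewrite in_cons; split.
- by case=> [->|/IH ->]; rewrite ?eqxx ?orbT.
- by case/orP=> [/eqP ->|/IH]; [left|right].
Qed.

Lemma size_add_div p e divs : size (prime.PrimeDecompAux.add_divisors (p, e) divs) = e.+1 * size divs.
Proof.
rewrite /prime.PrimeDecompAux.add_divisors; elim: e => [|e IH]; first by rewrite /= mul1n.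
by rewrite iterS size_merge size_cat size_map IH [in RHS]mulSn addnC.
Qed.

Lemma size_divisors n : size (divisors n) = \prod_(f <- prime_decomp n) f.2.+1.
Proof.
rewrite /divisors; elim: (prime_decomp n) => [|[p e] s IH] /=; first by rewrite big_nil.
by rewrite big_cons size_add_div IH.
Qed.

Lemma aux1 k e : 0 < k -> e.+1 ^ k <= k ^ k * 2 ^ e.
Proof.
move=> k0; set t := e %/ k.
have h1 : e.+1 <= t.+1 * k by apply: ltn_ceil.
have h2 : t.+1 <= 2 ^ t by apply: ltn_expl.
have h3 : t * k <= e by apply: leq_divM.
apply: (@leq_trans ((t.+1 * k) ^ k)); first by rewrite leq_exp2r.
rewrite expnMn mulnC leq_mul //.
apply: (@leq_trans ((2 ^ t) ^ k)); first by rewrite leq_exp2r.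
by rewrite -expnM leq_pexp2l.
Qed.

Lemma aux2 k e p : 0 < k -> 2 ^ k <= p -> e.+1 ^ k <= p ^ e.
Proof.
move=> k0 hp.
apply: (@leq_trans ((2 ^ e) ^ k)); first by rewrite leq_exp2r // ltn_expl.
rewrite expnAC. case: e => [|e]; first by rewrite !expn0.
by rewrite leq_exp2r.
Qed.

Lemma aux3 k e p : 0 < k -> 2 <= p ->
  e.+1 ^ k <= (if p < 2 ^ k then k ^ k else 1) * p ^ e.
Proof.
move=> k0 p2; case: ifP => hp.
- apply: leq_trans (@aux1 k e k0) _; rewrite leq_mul //.
  case: e => [|e]; first by rewrite !expn0.
  by rewrite leq_exp2r.
- rewrite mul1n; apply: aux2 => //; by rewrite leqNgt hp.
Qed.

Lemma prod_exp (T : Type) (s : seq T) (F : T -> nat) k :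
  (\prod_(x <- s) F x) ^ k = \prod_(x <- s) F x ^ k.
Proof.
elim: s => [|x s IH]; first by rewrite !big_nil exp1n.
by rewrite !big_cons expnMn IH.
Qed.

Lemma prod_c (s : seq (nat * nat)) (P : pred (nat*nat)) B :
  \prod_(f <- s) (if P f then B else 1) = B ^ (count P s).
Proof.
elim: s => [|x s IH]; first by rewrite big_nil.
rewrite big_cons IH /=; case: (P x) => /=; by rewrite ?expnS ?mul1n ?add0n.
Qed.

Lemma divisor_bound k n : 0 < k -> 0 < n ->
  size (divisors n) ^ k <= (k ^ k) ^ (2 ^ k) * n.
Proof.
move=> k0 n0; rewrite size_divisors prod_exp.
set s := prime_decomp n.
set c := fun f : nat * nat => if f.1 < 2 ^ k then k ^ k else 1.
apply: (@leq_trans (\prod_(f <- s) (c f * f.1 ^ f.2))).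
  rewrite big_seq [X in _ <= X]big_seq; apply: leq_prod => [[p e]] /=.
  move=> /mem_prime_decomp [pp _ _]; apply: aux3 => //; exact: prime_gt1.
rewrite big_split /= leq_mul //; last by rewrite /s -prod_prime_decomp.
rewrite /c prod_c leq_pexp2l ?expn_gt0 ?k0 //.
rewrite -size_filter -(size_map fst).
have -> : [seq x.1 | x <- filter (fun f : nat * nat => f.1 < 2 ^ k) s] =
   filter (fun p => p < 2 ^ k) (map fst s) by rewrite filter_map.
rewrite -[X in _ <= X](size_iota 0 (2 ^ k)); apply: uniq_leq_size.
  by apply: filter_uniq; apply: primes_uniq.
by move=> x; rewrite mem_filter mem_iota add0n => /andP[-> _].
Qed.

Lemma div_bound_std k n : (0 < k)%coq_nat -> (0 < n)%coq_nat ->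
  (Nat.pow (length (divisors n)) k <= Nat.pow (Nat.pow k k) (Nat.pow 2 k) * n)%coq_nat.
Proof.
move=> /ltP k0 /ltP n0; rewrite !powE; apply/leP; exact: divisor_bound.
Qed.

Lemma divide_dvdn d n : Nat.divide d n <-> d %| n.
Proof. split; [case=> z ->; exact: dvdn_mull | move/dvdnP => [z ->]; by exists z]. Qed.

Lemma div_mem d n : (0 < n)%coq_nat -> Nat.divide d n -> In d (divisors n).
Proof.
move=> /ltP n0 /divide_dvdn h; apply/inE'; by rewrite -dvdn_divisors.
Qed.

Lemma decomp q N P : (0 < q)%coq_nat ->
  Nat.divide q (Nat.pow 3 N * (Nat.pow 3 P - 1)) ->
  exists m d, q = Nat.pow 3 m * d /\ Nat.divide d (Nat.pow 3 P - 1).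
Proof.
move=> /ltP q0; rewrite !powE => /divide_dvdn h.
have [d cd qd] := pfactor_coprime (isT : prime 3) q0.
exists (logn 3 q), d; split; first by rewrite powE mulnC -qd.
apply/divide_dvdn.
have hd : d %| 3 ^ N * (3 ^ P - 1).
  apply: dvdn_trans h; rewrite qd; exact: dvdn_mulr.
have cd3 : coprime d 3 by rewrite coprime_sym.
by rewrite -(Gauss_dvdr _ (coprimeXr N cd3)).
Qed.

End DivBound.
Open Scope R_scope.

Lemma tdigit_S p q i : (0 < q)%nat ->
  tdigit p q (S i) = ((3 * ((p * 3 ^ i) mod q)) / q)%nat.
Proof.
intros hq. unfold tdigit.
assert (hq' : q <> 0%nat) by lia.
set (x := (p * 3 ^ i)%nat).
assert (E : (p * 3 ^ S i = 3 * (x / q) * q + 3 * (x mod q))%nat).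
{ unfold x. rewrite Nat.pow_succ_r'. pose proof (Nat.div_mod (p * 3 ^ i) q hq'). nia. }
rewrite E, Nat.div_add_l by exact hq'.
assert (Hl : (3 * (x mod q) / q < 3)%nat).
{ apply Nat.Div0.div_lt_upper_bound. pose proof (Nat.mod_upper_bound x q hq'). lia. }
rewrite Nat.add_comm, (Nat.mul_comm 3 (x / q)), Nat.Div0.mod_add.
apply Nat.mod_small; exact Hl.
Qed.

Lemma r_S p q i : (0 < q)%nat ->
  ((p * 3 ^ S i) mod q = (3 * ((p * 3 ^ i) mod q)) mod q)%nat.
Proof.
intros hq. rewrite Nat.Div0.mul_mod_idemp_r. f_equal. rewrite Nat.pow_succ_r'. lia.
Qed.

Lemma period_divides p q P : (0 < q)%nat -> is_eventual_period p q P ->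
  exists N, Nat.divide q (p * (3 ^ N * (3 ^ P - 1)))%nat.
Proof.
intros hq [hP [N HN]].
assert (hq' : q <> 0%nat) by lia.
set (r := fun i => ((p * 3 ^ i) mod q)%nat).
assert (Hrec : forall i, (3 * r i = q * tdigit p q (S i) + r (S i))%nat).
{ intro i. rewrite tdigit_S by exact hq. unfold r. rewrite r_S by exact hq.
  apply Nat.div_mod; exact hq'. }
assert (Hd : forall i, (N <= i)%nat -> tdigit p q (S (i + P)) = tdigit p q (S i)).
{ intros i hi. replace (S (i + P)) with (S i + P)%nat by lia. apply HN. lia. }
assert (Hj : forall j, (Z.of_nat (r (N + j + P)%nat) - Z.of_nat (r (N + j)%nat)
   = Z.of_nat (3 ^ j) * (Z.of_nat (r (N + P)%nat) - Z.of_nat (r N)))%Z).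
{ induction j.
  - rewrite !Nat.add_0_r. change (3^0)%nat with 1%nat. lia.
  - pose proof (Hrec (N + j + P)%nat) as h1. pose proof (Hrec (N + j)%nat) as h2.
    pose proof (Hd (N + j)%nat ltac:(lia)) as h3.
    replace (N + S j + P)%nat with (S (N + j + P)) by lia.
    replace (N + S j)%nat with (S (N + j)) by lia.
    rewrite Nat.pow_succ_r', Nat2Z.inj_mul.
    replace (S (N + j + P)) with (S (N + j + P)) in h1 by lia.
    rewrite (Nat.add_comm (N + j)%nat P) in *.
    replace (P + (N + j))%nat with (N + j + P)%nat in * by lia.
    rewrite h3 in h1. lia. }
assert (Hb : forall i, (r i < q)%nat) by (intro i; apply Nat.mod_upper_bound; exact hq').
assert (Heq : r (N + P)%nat = r N).
{ destruct (Nat.eq_dec (r (N + P)%nat) (r N)) as [e|ne]; [exact e|exfalso].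
  pose proof (Hj q) as h. pose proof (Nat.pow_gt_lin_r 3 q ltac:(lia)) as h3.
  pose proof (Hb (N + q + P)%nat). pose proof (Hb (N + q)%nat).
  pose proof (Hb (N + P)%nat). pose proof (Hb N).
  apply Nat2Z.inj_lt in h3.
  assert (Z.of_nat (r (N + P)%nat) <> Z.of_nat (r N)) by lia.
  nia. }
exists N.
unfold r in Heq.
pose proof (Nat.div_mod (p * 3 ^ (N + P)) q hq') as e1.
pose proof (Nat.div_mod (p * 3 ^ N) q hq') as e2.
rewrite Nat.pow_add_r in e1, Heq.
assert (hU : (1 <= 3 ^ P)%nat) by (pose proof (Nat.pow_gt_lin_r 3 P ltac:(lia)); lia).
rewrite Heq in e1.
set (A := ((p * (3 ^ N * 3 ^ P)) / q)%nat) in *.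
set (B := ((p * 3 ^ N) / q)%nat) in *.
set (R := ((p * 3 ^ N) mod q)%nat) in *.
set (T := (3 ^ N)%nat) in *. set (U := (3 ^ P)%nat) in *.
assert (e3 : (p * (T * (U - 1)) = p * (T * U) - p * T)%nat).
{ replace U with (S (U - 1)) at 2 by lia. nia. }
exists (A - B)%nat. rewrite e3, e1, e2. rewrite Nat.mul_sub_distr_r. nia.
Qed.

Fixpoint ps (a : nat -> nat) (m : nat) : R :=
  match m with 0%nat => 0 | S m' => ps a m' + INR (a m') / 3 ^ (S m') end.

Lemma sum_ps a m : sum_f_R0 (fun k => INR (a k) / 3 ^ (S k)) m = ps a (S m).
Proof. induction m; [simpl; lra|]. change (sum_f_R0 (fun k => INR (a k) / 3 ^ (S k)) m + INR (a (S m)) / 3 ^ (S (S m)) = ps a (S m) + INR (a (S m)) / 3 ^ (S (S m))). rewrite IHm; reflexivity. Qed.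

Lemma ps_mono a m j : ps a m <= ps a (m + j).
Proof.
induction j; [rewrite Nat.add_0_r; lra|].
rewrite Nat.add_succ_r. simpl.
assert (0 <= INR (a (m + j)%nat) / (3 * 3 ^ (m + j))).
{ apply Rmult_le_pos; [apply pos_INR| apply Rlt_le, Rinv_0_lt_compat, Rmult_lt_0_compat; [lra| apply pow_lt; lra]]. }
lra.
Qed.

Lemma ps_tail a (Ha : forall k, a k = 0%nat \/ a k = 2%nat) m j :
  ps a (m + j) + / 3 ^ (m + j) <= ps a m + / 3 ^ m.
Proof.
induction j; [rewrite Nat.add_0_r; lra|].
rewrite Nat.add_succ_r. simpl.
set (z := 3 ^ (m + j)) in *.
assert (hz : 0 < z) by (apply pow_lt; lra).
assert (ha : INR (a (m + j)%nat) <= 2).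
{ destruct (Ha (m + j)%nat) as [e|e]; rewrite e; simpl; lra. }
assert (INR (a (m + j)%nat) / (3 * z) + / (3 * z) <= / z).
{ rewrite Rinv_mult. unfold Rdiv. rewrite Rinv_mult.
  assert (0 < / z) by (apply Rinv_0_lt_compat; exact hz).
  assert (0 <= INR (a (m+j)%nat)) by apply pos_INR. nra. }
lra.
Qed.

Lemma cantor_bounds x a (Ha : forall k, a k = 0%nat \/ a k = 2%nat)
  (Hs : infinite_sum (fun k => INR (a k) / 3 ^ (S k)) x) m :
  ps a m <= x <= ps a m + / 3 ^ m.
Proof.
split.
- destruct (Rle_lt_dec (ps a m) x) as [h|h]; [exact h|exfalso].
  destruct (Hs (ps a m - x) ltac:(lra)) as [N HN].
  specialize (HN (max N m) (Nat.le_max_l _ _)).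
  unfold R_dist in HN. rewrite sum_ps in HN.
  pose proof (ps_mono a m (S (max N m) - m)) as hm.
  replace (m + (S (max N m) - m))%nat with (S (max N m)) in hm by lia.
  apply Rabs_def2 in HN. lra.
- destruct (Rle_lt_dec x (ps a m + / 3 ^ m)) as [h|h]; [exact h|exfalso].
  destruct (Hs (x - (ps a m + / 3 ^ m)) ltac:(lra)) as [N HN].
  specialize (HN (max N m) (Nat.le_max_l _ _)).
  unfold R_dist in HN. rewrite sum_ps in HN.
  pose proof (ps_tail a Ha m (S (max N m) - m)) as hm.
  replace (m + (S (max N m) - m))%nat with (S (max N m)) in hm by lia.
  assert (0 < / 3 ^ (S (max N m))) by (apply Rinv_0_lt_compat, pow_lt; lra).
  apply Rabs_def2 in HN. lra.
Qed.

Definition key (a : nat -> nat) (n : nat) : list bool :=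
  map (fun i => Nat.eqb (a i) 2) (seq 0 n).

Lemma key_eq a b n (Ha : forall k, a k = 0%nat \/ a k = 2%nat)
  (Hb : forall k, b k = 0%nat \/ b k = 2%nat) :
  key a n = key b n -> forall i, (i < n)%nat -> a i = b i.
Proof.
intros E i hi.
assert (E2 := f_equal (fun l => nth_error l i) E). simpl in E2.
unfold key in E2. rewrite !nth_error_map, nth_error_seq in E2.
destruct (Nat.ltb_spec i n); [|lia]. simpl in E2. injection E2 as E2.
destruct (Ha i) as [h1|h1]; destruct (Hb i) as [h2|h2]; rewrite h1, h2 in *;
  simpl in E2; congruence.
Qed.

Lemma ps_ext a b m : (forall i, (i < m)%nat -> a i = b i) -> ps a m = ps b m.
Proof.
induction m; intros H; simpl; [reflexivity|].
rewrite IHm by (intros; apply H; lia). rewrite H by lia. reflexivity.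
Qed.

Fixpoint allbl (n : nat) : list (list bool) :=
  match n with
  | 0%nat => nil :: nil
  | S n' => map (cons true) (allbl n') ++ map (cons false) (allbl n')
  end.

Lemma allbl_length n : length (allbl n) = (2 ^ n)%nat.
Proof. induction n; simpl; [reflexivity|]. rewrite length_app, !length_map, IHn. lia. Qed.

Lemma allbl_in n l : length l = n -> In l (allbl n).
Proof.
revert l; induction n; intros l hl.
- destruct l; [left; reflexivity| simpl in hl; lia].
- destruct l as [|b l]; [simpl in hl; lia|]. simpl in hl. simpl.
  apply in_or_app. destruct b; [left|right]; apply in_map; apply IHn; lia.
Qed.

Lemma key_length a n : length (key a n) = n.
Proof. unfold key. rewrite length_map, length_seq. reflexivity. Qed.

Lemma NoDup_map_on {A B : Type} (f : A -> B) (l : list A) :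
  (forall x y, In x l -> In y l -> f x = f y -> x = y) -> NoDup l -> NoDup (map f l).
Proof.
induction l as [|x l IH]; intros Hi Hn; simpl; [constructor|].
inversion Hn; subst. constructor.
- intro hin. apply in_map_iff in hin. destruct hin as [y [e hy]].
  assert (y = x) by (apply Hi; simpl; auto). subst. contradiction.
- apply IH; auto. intros; apply Hi; simpl; auto.
Qed.

Definition digP (x : R) (a : nat -> nat) : Prop :=
  (forall k, a k = 0%nat \/ a k = 2%nat) /\
  infinite_sum (fun k => INR (a k) / 3 ^ (S k)) x.

Definition dig (x : R) : nat -> nat :=
  epsilon (inhabits (fun _ : nat => 0%nat)) (digP x).

Lemma dig_spec x : cantor x -> digP x (dig x).
Proof. intros [_ H]. unfold dig. apply epsilon_spec. exact H. Qed.

Lemma INR_close a b : Rabs (INR a - INR b) < 1 -> a = b.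
Proof.
intros H. apply Rabs_def2 in H.
destruct (lt_eq_lt_dec a b) as [[h|h]|h]; auto.
- apply lt_INR in h. exfalso. assert (INR (S a) <= INR b) by (apply le_INR; apply INR_lt in h; lia).
  rewrite S_INR in *. lra.
- exfalso. assert (INR (S b) <= INR a) by (apply le_INR; lia).
  rewrite S_INR in *. lra.
Qed.

Lemma INR_pow3 n : INR (3 ^ n) = 3 ^ n.
Proof. rewrite pow_INR. f_equal. simpl. ring. Qed.

Lemma per_q n q (l : list (nat * nat)) : (1 <= q)%nat -> (q < 3 ^ n)%nat -> NoDup l ->
  (forall x, In x l -> cantor (INR (fst x) / INR q) /\ snd x = q) ->
  (length l <= 2 ^ n)%nat.
Proof.
intros hq1 hqn hnd hl.
set (g := fun x : nat * nat => key (dig (INR (fst x) / INR q)) n).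
assert (hqR : 0 < INR q) by (apply lt_0_INR; lia).
assert (hqn' : INR q < 3 ^ n) by (rewrite <- INR_pow3; apply lt_INR; exact hqn).
assert (h3 : 0 < 3 ^ n) by (apply pow_lt; lra).
assert (NoDup (map g l)).
{ apply NoDup_map_on; [|exact hnd].
  intros [x1 x2] [y1 y2] hx hy e. unfold g in e. simpl in e.
  destruct (hl _ hx) as [cx ex]. destruct (hl _ hy) as [cy ey]. simpl in *. subst.
  destruct (dig_spec _ cx) as [Ha Hsa]. destruct (dig_spec _ cy) as [Hb Hsb].
  pose proof (key_eq _ _ _ Ha Hb e) as hk.
  pose proof (ps_ext _ _ _ hk) as hps.
  pose proof (cantor_bounds _ _ Ha Hsa n) as b1.
  pose proof (cantor_bounds _ _ Hb Hsb n) as b2.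
  rewrite hps in b1.
  set (X := INR x1 / INR q) in *. set (Y := INR y1 / INR q) in *.
  assert (ex : INR x1 = X * INR q) by (unfold X; field; lra).
  assert (ey : INR y1 = Y * INR q) by (unfold Y; field; lra).
  assert (hb : Rabs (X - Y) <= / 3 ^ n) by (apply Rabs_le; lra).
  assert (hd : Rabs (INR x1 - INR y1) < 1).
  { rewrite ex, ey. replace (X * INR q - Y * INR q) with ((X - Y) * INR q) by ring.
    rewrite Rabs_mult, (Rabs_right (INR q)) by lra.
    apply Rle_lt_trans with (/ 3 ^ n * INR q).
    - apply Rmult_le_compat_r; lra.
    - apply Rmult_lt_reg_l with (3 ^ n); [exact h3|].
      rewrite <- Rmult_assoc, Rinv_r by lra. lra. }
  rewrite (INR_close _ _ hd). reflexivity. }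
rewrite <- (length_map g l), <- allbl_length.
apply NoDup_incl_length; [assumption|].
intros k hk. apply in_map_iff in hk. destruct hk as [x [<- _]].
apply allbl_in. unfold g. apply key_length.
Qed.

Lemma pow_lt_strict x y k : 0 <= x -> x < y -> (1 <= k)%nat -> x ^ k < y ^ k.
Proof.
intros h0 h1 hk. induction k; [lia|].
destruct k; [simpl; lra|].
assert (IH : x ^ S k < y ^ S k) by (apply IHk; lia).
change (x * x ^ S k < y * y ^ S k).
assert (0 <= x ^ S k) by (apply pow_le; lra). nra.
Qed.

Lemma exp_pow x k : exp x ^ k = exp (INR k * x).
Proof.
induction k; simpl; [rewrite Rmult_0_l, exp_0; reflexivity|].
rewrite IHk, <- exp_plus. f_equal. destruct k; simpl; ring.
Qed.

Lemma pow_as_exp b j : 0 < b -> b ^ j = exp (INR j * ln b).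
Proof. intros hb. rewrite <- exp_pow, exp_ln by exact hb. reflexivity. Qed.

Lemma exp_sq z : 0 <= z -> z ^ 2 / 4 <= exp z.
Proof.
intros hz.
assert (h : z / 2 <= exp (z / 2)).
{ destruct (Req_dec z 0) as [e|e].
  - subst. replace (0/2) with 0 by field. rewrite exp_0; lra.
  - pose proof (exp_ineq1 (z/2) ltac:(lra)). lra. }
replace z with (z/2 + z/2) at 2 by field. rewrite exp_plus.
assert (0 <= z/2) by lra. simpl. nra.
Qed.

Lemma INR_up_nat x : 0 <= x -> x <= INR (Z.to_nat (up x)).
Proof.
intros hx. destruct (archimed x) as [h1 h2].
assert (hz : (0 <= up x)%Z) by (apply le_IZR; simpl; lra).
rewrite INR_IZR_INZ, Z2Nat.id by exact hz. lra.
Qed.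

Lemma count_by (A : nat * nat -> Prop) (Bd : nat) (D : list nat) :
  (forall d l, NoDup l -> (forall x, In x l -> A x /\ snd x = d) -> (length l <= Bd)%nat) ->
  forall l, NoDup l -> (forall x, In x l -> A x /\ In (snd x) D) ->
  (length l <= length D * Bd)%nat.
Proof.
intros HB. induction D as [|d D IH]; intros l hnd hl.
- destruct l as [|x l]; [simpl; lia|]. destruct (hl x (or_introl eq_refl)) as [_ []].
- rewrite <- (filter_length (fun x => Nat.eqb (snd x) d) l).
  simpl length.
  assert (h1 : (length (filter (fun x => Nat.eqb (snd x) d) l) <= Bd)%nat).
  { apply (HB d); [apply NoDup_filter; exact hnd|].
    intros x hx. apply filter_In in hx. destruct hx as [hx e].
    apply Nat.eqb_eq in e. split; [apply hl; exact hx| exact e]. }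
  assert (h2 : (length (filter (fun x => negb (Nat.eqb (snd x) d)) l) <= length D * Bd)%nat).
  { apply IH; [apply NoDup_filter; exact hnd|].
    intros x hx. apply filter_In in hx. destruct hx as [hx e].
    destruct (hl x hx) as [ha hin]. split; [exact ha|].
    destruct hin as [e'|e']; [|exact e']. subst. rewrite Nat.eqb_refl in e. discriminate. }
  lia.
Qed.

Lemma card_union (A B C : nat * nat -> Prop) a b :
  card_le A a -> card_le B b -> (forall x, C x -> A x \/ B x) -> card_le C (a + b).
Proof.
intros HA HB HC l hnd hl.
set (f := fun x => if excluded_middle_informative (A x) then true else false).
rewrite <- (filter_length f l), plus_INR.
apply Rplus_le_compat.
- apply HA; [apply NoDup_filter; exact hnd|].
  intros x hx. apply filter_In in hx. destruct hx as [_ e]. unfold f in e.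
  destruct (excluded_middle_informative (A x)); [assumption|discriminate].
- apply HB; [apply NoDup_filter; exact hnd|].
  intros x hx. apply filter_In in hx. destruct hx as [hx e]. unfold f in e.
  destruct (excluded_middle_informative (A x)); [discriminate|].
  destruct (HC x (hl x hx)); [contradiction|assumption].
Qed.

Lemma flat_map_len {X Y : Type} (f : X -> list Y) (l : list X) b :
  (forall x, In x l -> INR (length (f x)) <= b) ->
  INR (length (flat_map f l)) <= INR (length l) * b.
Proof.
induction l as [|x l IH]; intros H; cbn [length flat_map]; [simpl; lra|].
rewrite length_app, plus_INR, S_INR.
assert (INR (length (f x)) <= b) by (apply H; left; reflexivity).
assert (INR (length (flat_map f l)) <= INR (length l) * b) by (apply IH; intros; apply H; right; assumption).
lra.
Qed.

Definition Dlist (Kn n : nat) : list nat :=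
  flat_map (fun m => flat_map (fun P => map (fun d => (3 ^ m * d)%nat)
     (prime.divisors (3 ^ P - 1))) (seq 1 (Kn * n))) (seq 0 n).

Definition KnOf (K : R) : nat := Z.to_nat (up (3 * Rabs K)).

Lemma ln_ge0 x : 1 <= x -> 0 <= ln x.
Proof.
intros h. destruct (Req_dec x 1) as [e|e]; [subst; rewrite ln_1; lra|].
pose proof (ln_increasing 1 x ltac:(lra) ltac:(lra)). rewrite ln_1 in *. lra.
Qed.

Lemma ln3_lt3 : ln 3 < 3.
Proof.
pose proof (exp_ineq1 3 ltac:(lra)).
pose proof (ln_increasing 3 (exp 3) ltac:(lra) ltac:(lra)). rewrite ln_exp in *. lra.
Qed.

Lemma pow_ge1 a b : (1 <= a)%nat -> (1 <= a ^ b)%nat.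
Proof. intros h. pose proof (Nat.pow_le_mono_l 1 a b h). rewrite Nat.pow_1_l in *. lia. Qed.

Lemma mem_Dlist K n p q : S_nK K n (p, q) -> In q (Dlist (KnOf K) n).
Proof.
intros [[hc [hg [hlo hhi]]] [P [[hper _] hPK]]].
assert (hq1 : (1 <= q)%nat) by (pose proof (pow_ge1 3 (n - 1)); lia).
destruct (period_divides p q P ltac:(lia) hper) as [N hN].
assert (hN' : Nat.divide q (3 ^ N * (3 ^ P - 1))).
{ apply (Nat.gauss q p); [exact hN|]. rewrite Nat.gcd_comm. exact hg. }
destruct (DivBound.decomp q N P ltac:(lia) hN') as [m [d [eq0 hd0]]].
assert (eq : q = (3 ^ m * d)%nat) by exact eq0.
assert (hd : Nat.divide d (3 ^ P - 1)%nat) by exact hd0.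
clear eq0 hd0.
assert (hP1 : (1 <= P)%nat) by (destruct hper; assumption).
assert (hd1 : (1 <= d)%nat) by (destruct d; [rewrite Nat.mul_0_r in eq; lia| lia]).
assert (hmn : (m < n)%nat).
{ destruct (Nat.lt_ge_cases m n) as [h|h]; [exact h|exfalso].
  pose proof (Nat.pow_le_mono_r 3 n m ltac:(lia) h). rewrite eq in hhi. nia. }
assert (hPn : (P <= KnOf K * n)%nat).
{ apply INR_le. rewrite mult_INR.
  assert (hqR : 1 <= INR q) by (apply (le_INR 1); exact hq1).
  assert (hl0 := ln_ge0 _ hqR).
  assert (hl1 : ln (INR q) < INR n * ln 3).
  { rewrite <- ln_pow by lra. apply ln_increasing; [lra|].
    rewrite <- INR_pow3. apply lt_INR. exact hhi. }
  pose proof ln3_lt3.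
  assert (hn0 : 0 <= INR n) by apply pos_INR.
  pose proof (INR_up_nat (3 * Rabs K) ltac:(pose proof (Rabs_pos K); lra)) as hK.
  fold (KnOf K) in hK.
  pose proof (Rle_abs K). pose proof (Rabs_pos K).
  assert (K * ln (INR q) <= Rabs K * ln (INR q)) by nra.
  assert (ln (INR q) <= INR n * 3) by nra.
  assert (Rabs K * ln (INR q) <= Rabs K * (INR n * 3)) by (apply Rmult_le_compat_l; lra).
  nra. }
unfold Dlist. apply in_flat_map. exists m. split; [apply in_seq; lia|].
apply in_flat_map. exists P. split; [apply in_seq; lia|].
replace q with (3 ^ m * d)%nat by (rewrite eq; reflexivity).
apply in_map. apply DivBound.div_mem; [|exact hd].
pose proof (Nat.pow_le_mono_r 3 1 P ltac:(lia) hP1). simpl in *. lia.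
Qed.

Lemma card_SnK K n :
  card_le (S_nK K n) (INR (length (Dlist (KnOf K) n)) * 2 ^ n).
Proof.
intros l hnd hl.
set (A := fun x : nat * nat => cantor (INR (fst x) / INR (snd x)) /\
   (1 <= snd x)%nat /\ (snd x < 3 ^ n)%nat).
assert (h : (length l <= length (Dlist (KnOf K) n) * 2 ^ n)%nat).
{ apply (count_by A).
  - intros d l' hnd' hl'. destruct l' as [|x l'']; [simpl; lia|].
    destruct (hl' x (or_introl eq_refl)) as [[_ [h1 h2]] e].
    apply (per_q n d); [lia|lia|exact hnd'|].
    intros y hy. destruct (hl' y hy) as [[hc _] e']. rewrite e' in hc. split; assumption.
  - exact hnd.
  - intros [p q] hx. pose proof (hl _ hx) as hs. split.
    + destruct hs as [[hc [hg [hlo hhi]]] _]. unfold A; simpl.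
      pose proof (pow_ge1 3 (n - 1)). split; [exact hc| split; lia].
    + simpl. apply (mem_Dlist K n p q). exact hs. }
apply le_INR in h. rewrite mult_INR, pow_INR in h. simpl (INR 2) in h. exact h.
Qed.

Lemma exp_le_mono a b : a <= b -> exp a <= exp b.
Proof. intros h. destruct (Rle_lt_or_eq_dec a b h) as [h'|h']; [left; apply exp_increasing; exact h'| subst; lra]. Qed.

Lemma card_le_mono A a b : card_le A a -> a <= b -> card_le A b.
Proof. intros H hab l h1 h2. specialize (H l h1 h2). lra. Qed.

Lemma div_real_bound k N : (1 <= k)%nat -> (0 < N)%nat ->
  INR (length (prime.divisors N)) ^ k <= INR ((k ^ k) ^ (2 ^ k)) * INR N.
Proof.
intros hk hN. rewrite <- pow_INR, <- mult_INR. apply le_INR.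
exact (DivBound.div_bound_std k N ltac:(lia) hN).
Qed.

Theorem corollary5p3 :
  (exists K : R, forall eps1 : R, 0 < eps1 ->
     count_bigO (fun n r => S_n n r /\ ~ S_nK K n r) eps1) ->
  forall eps1 : R, 0 < eps1 -> count_bigO S_n eps1.
Proof.
intros [K HK] eps heps.
destruct (HK eps heps) as [c1 [N1 H1]].
set (Kn := KnOf K).
assert (hln2 : 0 < ln 2).
{ pose proof (ln_increasing 1 2 ltac:(lra) ltac:(lra)). rewrite ln_1 in *. lra. }
assert (hln3 : 0 < ln 3).
{ pose proof (ln_increasing 1 3 ltac:(lra) ltac:(lra)). rewrite ln_1 in *. lra. }
set (delta := eps * ln 2 / 2).
assert (hdelta : 0 < delta) by (unfold delta; nra).
set (k := S (Z.to_nat (up (INR Kn * ln 3 / delta)))).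
assert (hk : INR Kn * ln 3 <= INR k * delta).
{ assert (h0 : 0 <= INR Kn * ln 3 / delta).
  { apply Rmult_le_pos; [apply Rmult_le_pos; [apply pos_INR|lra]| apply Rlt_le, Rinv_0_lt_compat; exact hdelta]. }
  pose proof (INR_up_nat _ h0) as h1.
  assert (INR (Z.to_nat (up (INR Kn * ln 3 / delta))) <= INR k) by (apply le_INR; unfold k; lia).
  assert (h2 : INR Kn * ln 3 / delta <= INR k) by lra.
  apply (Rmult_le_compat_r delta) in h2; [|lra].
  replace (INR Kn * ln 3 / delta * delta) with (INR Kn * ln 3) in h2 by (field; lra). lra. }
set (Bk := ((k ^ k) ^ (2 ^ k))%nat).
assert (hBk : 1 <= INR Bk).
{ apply (le_INR 1). unfold Bk. apply pow_ge1, pow_ge1. unfold k; lia. }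
set (c2 := INR Kn * INR Bk * 4 / delta ^ 2).
exists (c1 + c2), N1. intros n hn.
rewrite Rmult_plus_distr_r.
apply (card_union (fun r => S_n n r /\ ~ S_nK K n r) (S_nK K n)); [exact (H1 n hn)| |].
2:{ intros x hx. destruct (classic (S_nK K n x)); [right|left]; auto. }
set (y := exp (INR n * delta)).
assert (hy : 0 < y) by apply exp_pos.
assert (hdiv : forall P, In P (seq 1 (Kn * n)) ->
   INR (length (prime.divisors (3 ^ P - 1))) <= INR Bk * y).
{ intros P hP. apply in_seq in hP.
  set (s := INR (length (prime.divisors (3 ^ P - 1)))).
  assert (h3P : (0 < 3 ^ P - 1)%nat).
  { pose proof (Nat.pow_le_mono_r 3 1 P ltac:(lia) ltac:(lia)). simpl in *. lia. }
  assert (hs0 : 0 <= s) by apply pos_INR.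
  assert (hk1 : (1 <= k)%nat) by (unfold k; lia).
  pose proof (div_real_bound k (3 ^ P - 1) hk1 h3P) as hb. fold s in hb. fold Bk in hb.
  assert (hN : INR (3 ^ P - 1) <= y ^ k).
  { assert (hh : (3 ^ P - 1 <= 3 ^ (Kn * n))%nat)
      by (pose proof (Nat.pow_le_mono_r 3 P (Kn * n) ltac:(lia) ltac:(lia)); lia).
    apply le_INR in hh. eapply Rle_trans; [exact hh|].
    rewrite INR_pow3, pow_as_exp by lra. unfold y. rewrite exp_pow. apply exp_le_mono.
    rewrite mult_INR. pose proof (pos_INR n). nra. }
  assert (hsk : s ^ k <= (INR Bk * y) ^ k).
  { rewrite Rpow_mult_distr. eapply Rle_trans; [exact hb|].
    apply Rmult_le_compat; [lra|apply pos_INR| |exact hN].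
    rewrite <- (pow_1 (INR Bk)) at 1. apply Rle_pow; [lra|exact hk1]. }
  destruct (Rle_lt_dec s (INR Bk * y)) as [h|h]; [exact h|exfalso].
  pose proof (pow_lt_strict (INR Bk * y) s k ltac:(nra) h hk1). lra. }
apply card_le_mono with (INR (length (Dlist Kn n)) * 2 ^ n); [apply card_SnK|].
assert (hD : INR (length (Dlist Kn n)) <= INR n * (INR (Kn * n) * (INR Bk * y))).
{ unfold Dlist. eapply Rle_trans.
  - apply flat_map_len with (b := INR (Kn * n) * (INR Bk * y)).
    intros m _. eapply Rle_trans.
    + apply flat_map_len with (b := INR Bk * y). intros P hP. rewrite length_map. apply hdiv; exact hP.
    + rewrite length_seq; lra.
  - rewrite length_seq; lra. }
assert (h2n : 2 ^ n = exp (INR n * ln 2)) by (apply pow_as_exp; lra).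
assert (hR : Rpower 2 (INR n * (1 + eps)) = 2 ^ n * y * y).
{ unfold Rpower, y. rewrite h2n, <- !exp_plus. f_equal. unfold delta. field. }
rewrite hR.
assert (hsq : INR n ^ 2 <= 4 / delta ^ 2 * y).
{ pose proof (exp_sq (INR n * delta) ltac:(pose proof (pos_INR n); nra)) as he. fold y in he.
  assert (e : INR n ^ 2 = (INR n * delta) ^ 2 / 4 * (4 / delta ^ 2)) by (field; lra).
  rewrite e, Rmult_comm. apply Rmult_le_compat_l; [|exact he].
  apply Rlt_le. apply Rdiv_lt_0_compat; [lra| apply pow_lt; lra]. }
assert (h2p : 0 < 2 ^ n) by (apply pow_lt; lra).
eapply Rle_trans; [apply Rmult_le_compat_r; [lra|exact hD]|].
rewrite mult_INR.
assert (hZ : 0 <= INR Kn * INR Bk * y * 2 ^ n).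
{ pose proof (pos_INR Kn). apply Rmult_le_pos; [|lra]. apply Rmult_le_pos; [|lra]. nra. }
replace (INR n * (INR Kn * INR n * (INR Bk * y)) * 2 ^ n) with (INR n ^ 2 * (INR Kn * INR Bk * y * 2 ^ n)) by ring.
replace (c2 * (2 ^ n * y * y)) with (4 / delta ^ 2 * y * (INR Kn * INR Bk * y * 2 ^ n)) by (unfold c2; field; lra).
apply Rmult_le_compat_r; [exact hZ|exact hsq].
Qed.
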